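(* Let $n\ge 3$ be finite and let $\mathfrak D$ be a polyadic equality algebra of dimension $n$ that is generated by the set $\{x\in D:\Delta x\neq n\}$. If the diagonal free reduct $\mathfrak{Rd}_{df}\mathfrak D$ is completely representable, then $\mathfrak D$ is completely representable.
   Context: For an element $x$ of an algebra of dimension $n$, $\Delta x=\{i<n: \mathsf c_ix\neq x\}$ is its dimension set. $\mathfrak{Rd}_{df}\mathfrak D$ is the reduct of $\mathfrak D$ obtained by discarding diagonal elements and substitutions, a diagonal free cylindric algebra. An algebra is completely representable if there is an injective homomorphism into a product of set algebras of the appropriate type (for diagonal free algebras, with units of the form $\prod_{i<n}U_i$) preserving all existing suprema. *)

(* Defs.v *)
From mathcomp Require Import all_boot.
Set Implicit Arguments. Unset Strict Implicit. Unset Printing Implicit Defensive.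

Record pea_sig (n : nat) := PeaSig {
  car :> Type;
  bjoin : car -> car -> car;
  bmeet : car -> car -> car;
  bcompl : car -> car;
  bzero : car;
  bone : car;
  cyl : {set 'I_n} -> car -> car;
  subst : ('I_n -> 'I_n) -> car -> car;
  diag : 'I_n -> 'I_n -> car
}.
Arguments bjoin {n} p _ _.  Arguments bmeet {n} p _ _.  Arguments bcompl {n} p _.
Arguments bzero {n} p.  Arguments bone {n} p.  Arguments cyl {n} p _ _.
Arguments subst {n} p _ _.  Arguments diag {n} p _ _.

Section PEA.
Variables (n : nat) (D : pea_sig n).

Local Notation "x + y" := (bjoin D x y).
Local Notation "x * y" := (bmeet D x y).
Local Notation "- x" := (bcompl D x).
Local Notation "0" := (bzero D).
Local Notation "1" := (bone D).

Definition ble (x y : D) : Prop := x + y = y.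

Definition boolean_axioms : Prop :=
  ( (forall x y : D, x + y = y + x) /\
      (forall x y : D, x * y = y * x) /\
      (forall x y z : D, x + (y + z) = (x + y) + z) /\
      (forall x y z : D, x * (y * z) = (x * y) * z) /\
      (forall x y : D, x + (x * y) = x) /\
      (forall x y : D, x * (x + y) = x) /\
      (forall x y z : D, x * (y + z) = (x * y) + (x * z)) /\
      (forall x : D, x + - x = 1) /\
      (forall x : D, x * - x = 0)).

Definition repl (i j : 'I_n) : 'I_n -> 'I_n := fun k => if k == i then j else k.

(* Halmos' axioms (P1)-(P12) for polyadic algebras and (E1)-(E3)
   for polyadic equality algebras (Henkin-Monk-Tarski, Part II, 5.4.1). *)
Definition is_PEA : Prop :=
  ( boolean_axioms /\
      (forall G, cyl D G 0 = 0) /\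
      (forall G (x : D), x + cyl D G x = cyl D G x) /\
      (forall G (x y : D), cyl D G (x * cyl D G y) = cyl D G x * cyl D G y) /\
      (forall x : D, cyl D set0 x = x) /\
      (forall G H (x : D), cyl D (G :|: H) x = cyl D G (cyl D H x)) /\
      (forall x : D, subst D id x = x) /\
      (forall s t (x : D), subst D (s \o t) x = subst D s (subst D t x)) /\
      (forall t (x y : D), subst D t (x + y) = subst D t x + subst D t y) /\
      (forall t (x : D), subst D t (- x) = - subst D t x) /\
      (forall s t (G : {set 'I_n}) (x : D), (forall i, i \notin G -> s i = t i) ->
         subst D s (cyl D G x) = subst D t (cyl D G x)) /\
      (forall t (G : {set 'I_n}) (x : D),
         (forall i j, t i \in G -> t j \in G -> t i = t j -> i = j) ->
         cyl D G (subst D t x) = subst D t (cyl D [set i | t i \in G] x)) /\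
      (forall t i j, subst D t (diag D i j) = diag D (t i) (t j)) /\
      (forall i, diag D i i = 1) /\
      (forall i j (x : D), ble (x * diag D i j) (subst D (repl i j) x))).

Definition cyl1 (i : 'I_n) (x : D) : D := cyl D [set i] x.

(* i ∈ Δx  iff  c_i x <> x ;  "Δx ≠ n" means Δx is not all of {0,..,n-1} *)
Definition in_dimset (x : D) (i : 'I_n) : Prop := cyl1 i x <> x.
Definition dimset_not_full (x : D) : Prop := ~ (forall i : 'I_n, in_dimset x i).

Definition subuniverse (P : D -> Prop) : Prop :=
  ( P 0 /\ P 1 /\
      (forall x y, P x -> P y -> P (x + y)) /\
      (forall x y, P x -> P y -> P (x * y)) /\
      (forall x, P x -> P (- x)) /\
      (forall G x, P x -> P (cyl D G x)) /\
      (forall t x, P x -> P (subst D t x)) /\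
      (forall i j, P (diag D i j))).

Definition generated_by (X : D -> Prop) : Prop :=
  forall P : D -> Prop, subuniverse P -> (forall x, X x -> P x) -> forall x, P x.

Definition is_sup (X : D -> Prop) (a : D) : Prop :=
  (forall x, X x -> ble x a) /\ (forall b, (forall x, X x -> ble x b) -> ble a b).

(* Complete representability of D as a polyadic equality algebra:
   an injective homomorphism into a product (indexed by K) of polyadic
   equality set algebras with units U_k^n, preserving all existing
   suprema.  Subsets of U_k^n are predicates; the product is
   represented componentwise. *)
Definition completely_representable : Prop :=
  exists (K : Type) (U : K -> Type) (f : D -> forall k, ('I_n -> U k) -> Prop),
    ( (forall x y k s, f (x + y) k s <-> f x k s \/ f y k s) /\
        (forall x y k s, f (x * y) k s <-> f x k s /\ f y k s) /\
        (forall x k s, f (- x) k s <-> ~ f x k s) /\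
        (forall k s, f 0 k s <-> False) /\
        (forall k s, f 1 k s <-> True) /\
        (forall G x k s, f (cyl D G x) k s <->
           exists t : 'I_n -> U k, (forall i, i \notin G -> t i = s i) /\ f x k t) /\
        (forall tau x k s, f (subst D tau x) k s <-> f x k (s \o tau)) /\
        (forall i j k s, f (diag D i j) k s <-> s i = s j) /\
        (forall x y, (forall k s, f x k s <-> f y k s) -> x = y) /\
        (forall X a, is_sup X a ->
           forall k s, f a k s <-> exists x, X x /\ f x k s)).

(* Complete representability of the diagonal free reduct Rd_df D
   (Boolean operations and c_i, i < n): an injective homomorphism into a
   product of diagonal free cylindric set algebras with units
   prod_(i<n) U_(k,i), preserving all existing suprema. *)
Definition df_completely_representable : Prop :=
  exists (K : Type) (U : K -> 'I_n -> Type)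
         (f : D -> forall k, (forall i : 'I_n, U k i) -> Prop),
    ( (forall x y k s, f (x + y) k s <-> f x k s \/ f y k s) /\
        (forall x y k s, f (x * y) k s <-> f x k s /\ f y k s) /\
        (forall x k s, f (- x) k s <-> ~ f x k s) /\
        (forall k s, f 0 k s <-> False) /\
        (forall k s, f 1 k s <-> True) /\
        (forall i x k s, f (cyl1 i x) k s <->
           exists t : (forall j : 'I_n, U k j),
             (forall j, j != i -> t j = s j) /\ f x k t) /\
        (forall x y, (forall k s, f x k s <-> f y k s) -> x = y) /\
        (forall X a, is_sup X a ->
           forall k s, f a k s <-> exists x, X x /\ f x k s)).

End PEA.

(* Main.v *)
Require Import Defs.
From mathcomp Require Import all_boot.
From Stdlib Require Import FunctionalExtensionality ProofIrrelevance Classical ClassicalEpsilon PropExtensionality.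
Unset Printing Implicit Defensive.

Section Upd.
Context {n : nat} {V : 'I_n -> Type}.

Definition upd (t : forall i, V i) (j : 'I_n) (v : V j) : forall i, V i :=
  fun i => match j =P i with ReflectT e => eq_rect j V v i e | ReflectF _ => t i end.

Lemma upd_eq t j v : upd t j v j = v.
Proof. rewrite /upd; destruct (j =P j) as [e|e]; last by case: e.
by rewrite (eq_irrelevance e erefl). Qed.

Lemma upd_neq t j v i : i != j -> upd t j v i = t i.
Proof. move=> ne; rewrite /upd; destruct (j =P i) as [e|e] => //.
by subst; rewrite eqxx in ne. Qed.

Lemma upd_same t j : upd t j (t j) = t.
Proof. apply: functional_extensionality_dep => i.
case: (eqVneq i j) => [->|ne]; [by rewrite upd_eq | by rewrite upd_neq]. Qed.

Lemma upd_upd t j v v' : upd (upd t j v) j v' = upd t j v'.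
Proof. apply: functional_extensionality_dep => i.
case: (eqVneq i j) => [->|ne]; [by rewrite !upd_eq | by rewrite !upd_neq]. Qed.

Lemma agree_upd (r t : forall i, V i) i : (forall a, a != i -> r a = t a) -> r = upd t i (r i).
Proof. move=> H; apply: functional_extensionality_dep => a.
case: (eqVneq a i) => [->|ne]; [by rewrite upd_eq | by rewrite upd_neq // H]. Qed.

Lemma upd_comm t i l u v : i != l -> upd (upd t l v) i u = upd (upd t i u) l v.
Proof. move=> il; apply: functional_extensionality_dep => a.
case: (eqVneq a i) => [e|ai].
  by subst a; rewrite upd_eq upd_neq // upd_eq.
case: (eqVneq a l) => [e|al].
  by subst a; rewrite upd_neq // !upd_eq.
by rewrite !upd_neq.
Qed.

Lemma coord_ind (R : forall i, V i -> V i -> Prop) (g : (forall i, V i) -> Prop) :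
  (forall t i u, R i (t i) u -> g t -> g (upd t i u)) ->
  forall s s', (forall i, R i (s i) (s' i)) -> g s -> g s'.
Proof.
move=> H s s' HR gs.
pose mix (m : nat) : forall i, V i := fun i => if (i < m)%N then s' i else s i.
have: forall m, (m <= n)%N -> g (mix m).
  elim=> [_|m IH Hm].
    have -> : mix 0 = s by apply: functional_extensionality_dep => i.
    done.
  have Hm' : (m < n)%N by [].
  have -> : mix m.+1 = upd (mix m) (Ordinal Hm') (s' (Ordinal Hm')).
    apply: functional_extensionality_dep => i; rewrite /mix.
    case: (eqVneq i (Ordinal Hm')) => [->|ne]; first by rewrite upd_eq /= ltnSn.
    rewrite upd_neq // ltnS leq_eqVlt.
    have -> : (val i == m) = false by apply/negbTE; apply: contra ne => /eqP e; apply/eqP/val_inj.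
    done.
  apply: H; last by apply: IH; apply: ltnW.
  by rewrite /mix ltnn.
move/(_ n (leqnn n)).
have -> // : mix n = s' by apply: functional_extensionality_dep => i; rewrite /mix ltn_ord.
Qed.
End Upd.
Arguments upd {n V} t j v i.

Lemma neqC (T : eqType) (a b : T) : a != b -> b != a.
Proof. by rewrite eq_sym. Qed.
Arguments neqC {T a b}.

Lemma third (n : nat) (n3 : (2 < n)%N) (i j : 'I_n) : exists l : 'I_n, l != i /\ l != j.
Proof.
apply: NNPP => H.
have sub : [set: 'I_n] \subset [set i; j].
  apply/subsetP; move=> l _; rewrite !inE; apply/orP.
  case: (eqVneq l i) => [_|ni]; first by left.
  case: (eqVneq l j) => [_|nj]; first by right.
  by exfalso; apply: H; exists l.
have := subset_leq_card sub; rewrite cardsT card_ord cards2.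
by case: (i != j) => /= le; move: (leq_trans n3 le).
Qed.

Arguments third {n} n3 i j.

Section Eqv.
Variables (n : nat) (n3 : (2 < n)%N) (V : 'I_n -> Type) (E : forall i j, V i -> V j -> Prop).
Hypothesis Esym : forall i j u v, i != j -> E i j u v -> E j i v u.
Hypothesis Etot : forall i j u, i != j -> exists v, E i j u v.
Hypothesis Etr : forall i j l u v w, i != j -> j != l -> i != l -> E i j u v -> E j l v w -> E i l u w.

Definition eqv i (u : V i) j (v : V j) := exists l w, [/\ l != i, l != j, E i l u w & E j l v w].

Lemma eqv_refl i u : eqv i u i u.
Proof. have [l [li _]] := third n3 i i. have [w Hw] := Etot i l u (neqC li).
by exists l, w; split. Qed.

Lemma eqv_sym i u j v : eqv i u j v -> eqv j v i u.
Proof. by case=> l [w [a b c d]]; exists l, w; split. Qed.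

Lemma E_eqv i u j v : i != j -> (eqv i u j v <-> E i j u v).
Proof.
move=> ij; split.
  case=> l [w [li lj Eil Ejl]].
  apply: (Etr i l j u w v) Eil (Esym j l v w _ Ejl); by rewrite // eq_sym.
move=> Eij; have [l [li lj]] := third n3 i j.
have [w Hw] := Etot j l v (neqC lj).
exists l, w; split => //.
apply: (Etr i j l u v w) Eij Hw; by rewrite // eq_sym.
Qed.
Lemma eqvK i u j v : eqv i u j v -> forall q y, q != i -> q != j -> E i q u y -> E j q v y.
Proof.
move=> H q y qi qj Eiq.
case: (eqVneq i j) => [eij|nij]; last first.
  have Eij := (E_eqv i u j v nij).1 H.
  exact: (Etr j i q v u y (neqC nij) (neqC qi) (neqC qj) (Esym i j u v nij Eij) Eiq).
subst j. case: H => l [w [li _ Eil Evl]].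
case: (eqVneq q l) => [eql|nql].
  subst q. have [m [mi ml]] := third n3 i l.
  have [z Ez] := Etot l m w (neqC ml).
  have Eim : E i m u z := Etr i l m u w z (neqC li) (neqC ml) (neqC mi) Eil Ez.
  have Eim' : E i m v z := Etr i l m v w z (neqC li) (neqC ml) (neqC mi) Evl Ez.
  have Elm : E l m y z := Etr l i m y u z li (neqC mi) (neqC ml) (Esym i l u y (neqC li) Eiq) Eim.
  have Eli : E l i y v := Etr l m i y z v (neqC ml) mi li Elm (Esym i m v z (neqC mi) Eim').
  exact: Esym l i y v li Eli.
have Eql : E q l y w := Etr q i l y u w qi (neqC li) nql (Esym i q u y (neqC qi) Eiq) Eil.
have Eqi : E q i y v := Etr q l i y w v nql li qi Eql (Esym i l v w (neqC li) Evl).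
exact: Esym q i y v qi Eqi.
Qed.

Lemma eqv_trans i u j v m x : eqv i u j v -> eqv j v m x -> eqv i u m x.
Proof.
move=> H1 H2.
case: (boolP ((j == i) || (j == m))) => Hj.
  have [q [qi qm]] := third n3 i m.
  have qj : q != j by case/orP: Hj => /eqP ->.
  have [y Ey] := Etot i q u (neqC qi).
  have Ejq := eqvK i u j v H1 q y qi qj Ey.
  have Emq := eqvK j v m x H2 q y qj qm Ejq.
  by exists q, y; split.
move: Hj; rewrite negb_or => /andP [ji jm].
exists j, v; split => //.
  exact: (E_eqv i u j v (neqC ji)).1 H1.
exact: (E_eqv m x j v (neqC jm)).1 (eqv_sym j v m x H2).
Qed.

Lemma eqv_partner i u u' : eqv i u i u' -> forall l, l != i -> exists v, E i l u v /\ E i l u' v.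
Proof.
move=> H l li; have [v Ev] := Etot i l u (neqC li).
by exists v; split => //; apply: (eqvK i u i u' H l v li li Ev).
Qed.
End Eqv.

Section Alg.
Variables (n : nat) (D : pea_sig n).
Hypothesis n3 : (2 < n)%N.
Hypothesis P5 : forall x : D, cyl D set0 x = x.
Hypothesis P6 : forall G H (x : D), cyl D (G :|: H) x = cyl D G (cyl D H x).
Hypothesis P7 : forall x : D, subst D id x = x.
Hypothesis P8 : forall s t (x : D), subst D (s \o t) x = subst D s (subst D t x).
Hypothesis P9 : forall t (x y : D), subst D t (bjoin D x y) = bjoin D (subst D t x) (subst D t y).
Hypothesis P10 : forall t (x : D), subst D t (bcompl D x) = bcompl D (subst D t x).
Hypothesis P11 : forall s t (G : {set 'I_n}) (x : D), (forall i, i \notin G -> s i = t i) ->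
         subst D s (cyl D G x) = subst D t (cyl D G x).
Hypothesis P12 : forall t (G : {set 'I_n}) (x : D),
         (forall i j, t i \in G -> t j \in G -> t i = t j -> i = j) ->
         cyl D G (subst D t x) = subst D t (cyl D [set i | t i \in G] x).
Hypothesis E1 : forall t i j, subst D t (diag D i j) = diag D (t i) (t j).
Hypothesis E2 : forall i, diag D i i = bone D.
Hypothesis E3 : forall i j (x : D), ble (bmeet D x (diag D i j)) (subst D (repl i j) x).

Lemma cylG_sem (V : 'I_n -> Type) (g : D -> (forall i, V i) -> Prop) :
  (forall i x s, g (cyl1 i x) s <-> exists t, (forall j, j != i -> t j = s j) /\ g x t) ->
  forall G x s, g (cyl D G x) s <-> exists t, (forall j, j \notin G -> t j = s j) /\ g x t.
Proof.
move=> Hc1 G; move: {2}#|G| (erefl #|G|) => N; elim: N G => [|N IH] G HG x s.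
  move/eqP: HG; rewrite cards_eq0 => /eqP ->; rewrite P5; split.
    by move=> gs; exists s; split.
  case=> t [Ht gt]; have -> : s = t by apply: functional_extensionality_dep => j; rewrite Ht ?inE.
  done.
have [i iG] : exists i, i \in G.
  apply: NNPP => H; move: HG; have -> : G = set0.
    by apply/setP => i; rewrite inE; apply/negbTE/negP => iG; apply: H; exists i.
  by rewrite cards0.
have HG' : #|G :\ i| = N by rewrite (cardsD1 i G) iG in HG; case: HG.
rewrite -{1}(setD1K iG) P6 -/(cyl1 i _) Hc1; split.
  case=> t1 [Ht1 g1]; have [t [Ht gt]] := (IH _ HG' x t1).1 g1.
  exists t; split => // j jG.
  have ji : j != i by apply: contra jG => /eqP ->.
  rewrite Ht ?Ht1 //; by rewrite !inE ji.
case=> t [Ht gt]; exists (upd s i (t i)); split; first by move=> j ji; rewrite upd_neq.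
apply/(IH _ HG' x); exists t; split => // j; rewrite !inE negb_and negbK.
case: (eqVneq j i) => [->|ji] /=; first by rewrite upd_eq.
by move=> jG; rewrite upd_neq // Ht.
Qed.

Lemma cylG_closed (P : D -> Prop) :
  (forall i x, P x -> P (cyl1 i x)) -> forall G x, P x -> P (cyl D G x).
Proof.
move=> Hc1 G; move: {2}#|G| (erefl #|G|) => N; elim: N G => [|N IH] G HG x Px.
  by move/eqP: HG; rewrite cards_eq0 => /eqP ->; rewrite P5.
have [i iG] : exists i, i \in G.
  apply: NNPP => H; move: HG; have -> : G = set0.
    by apply/setP => i; rewrite inE; apply/negbTE/negP => iG; apply: H; exists i.
  by rewrite cards0.
have HG' : #|G :\ i| = N by rewrite (cardsD1 i G) iG in HG; case: HG.
by rewrite -(setD1K iG) P6; apply: Hc1; apply: IH.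
Qed.

Variables (K : Type) (U : K -> 'I_n -> Type) (f : D -> forall k, (forall i : 'I_n, U k i) -> Prop).
Hypothesis fJ : forall x y k s, f (bjoin D x y) k s <-> f x k s \/ f y k s.
Hypothesis fM : forall x y k s, f (bmeet D x y) k s <-> f x k s /\ f y k s.
Hypothesis fC : forall x k s, f (bcompl D x) k s <-> ~ f x k s.
Hypothesis f0 : forall k s, f (bzero D) k s <-> False.
Hypothesis f1 : forall k s, f (bone D) k s <-> True.
Hypothesis fc : forall i x k s, f (cyl1 i x) k s <->
           exists t : (forall j : 'I_n, U k j), (forall j, j != i -> t j = s j) /\ f x k t.
Hypothesis finj : forall x y, (forall k s, f x k s <-> f y k s) -> x = y.

Lemma ble_sem (x y : D) : ble x y <-> forall k s, f x k s -> f y k s.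
Proof.
split; first by move=> H k s fx; rewrite -H fJ; left.
by move=> H; apply: finj => k s; rewrite fJ; split; [case=> // /H|right].
Qed.

Lemma fc_upd i x k s : f (cyl1 i x) k s <-> exists u, f x k (upd s i u).
Proof.
rewrite fc; split.
  case=> t [Ht ft]; exists (t i); by rewrite -(agree_upd t s i Ht).
by case=> u fu; exists (upd s i u); split => // j ji; rewrite upd_neq.
Qed.

Lemma sub_mono t (x y : D) : (forall k s, f x k s -> f y k s) ->
  forall k s, f (subst D t x) k s -> f (subst D t y) k s.
Proof. by move/ble_sem => H; apply/ble_sem; rewrite /ble -P9 H. Qed.

Lemma sub_C t x k s : f (subst D t (bcompl D x)) k s <-> ~ f (subst D t x) k s.
Proof. by rewrite P10 fC. Qed.
Lemma sub_J t x y k s : f (subst D t (bjoin D x y)) k s <-> f (subst D t x) k s \/ f (subst D t y) k s.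
Proof. by rewrite P9 fJ. Qed.

Lemma meet_eq (x y : D) : bmeet D x y = bcompl D (bjoin D (bcompl D x) (bcompl D y)).
Proof.
apply: finj => k s; rewrite fM fC fJ !fC; split; first by case=> a b [].
move=> H; split; apply: NNPP => H'; apply: H; by [left|right].
Qed.

Lemma sub_M t x y k s : f (subst D t (bmeet D x y)) k s <-> f (subst D t x) k s /\ f (subst D t y) k s.
Proof.
rewrite meet_eq sub_C sub_J !sub_C; split; last by case=> a b [].
move=> H; split; apply: NNPP => H'; apply: H; by [left|right].
Qed.

Lemma sub_1 t k s : f (subst D t (bone D)) k s.
Proof.
have -> : bone D = bjoin D (bone D) (bcompl D (bone D)).
  by apply: finj => k' s'; rewrite fJ fC !f1; tauto.
rewrite sub_J sub_C; exact: classic.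
Qed.

Lemma sub_0 t k s : ~ f (subst D t (bzero D)) k s.
Proof.
have -> : bzero D = bcompl D (bone D) by apply: finj => k' s'; rewrite fC f0 f1; tauto.
rewrite sub_C => H; apply: H; exact: sub_1.
Qed.

Lemma sub_cyl a b z k s : f (subst D (repl a b) z) k s -> f (cyl1 a z) k s.
Proof.
have Heq : subst D (repl a b) (cyl1 a z) = cyl1 a z.
  rewrite /cyl1 (P11 (repl a b) id) ?P7 // => i; rewrite inE /repl => /negbTE -> //.
rewrite -Heq; apply: sub_mono => k' s' fz; apply/fc; by exists s'.
Qed.

Lemma cyl_sub a b x : a != b -> cyl1 a (subst D (repl a b) x) = subst D (repl a b) x.
Proof.
move=> ab; rewrite /cyl1 P12.
  have -> : [set i | repl a b i \in [set a]] = set0.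
    apply/setP => i; rewrite !inE /repl; case: ifP => [_|/negbT ia].
      by rewrite eq_sym (negbTE ab).
    by rewrite (negbTE ia).
  by rewrite P5.
move=> i j; rewrite !inE /repl; case: ifP => [_|/negbT ia].
  by rewrite eq_sym (negbTE ab).
by rewrite (negbTE ia).
Qed.

Lemma E3_sem i j x k s : f x k s -> f (diag D i j) k s -> f (subst D (repl i j) x) k s.
Proof. move=> a b; exact: ((ble_sem _ _).1 (E3 i j x) k s (proj2 (fM _ _ _ _) (conj a b))). Qed.

Lemma S5 i j x k s : f (subst D (repl i j) x) k s -> f (diag D i j) k s -> f x k s.
Proof.
move=> a b; apply: NNPP => H.
have := E3_sem i j (bcompl D x) k s; rewrite fC sub_C; by move/(_ H b).
Qed.

Lemma cd1 i j k s : i != j -> f (cyl1 i (diag D i j)) k s.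
Proof.
move=> ij; apply: (sub_cyl i j); rewrite E1 /repl eqxx.
by rewrite eq_sym (negbTE ij) E2 f1.
Qed.

Lemma S6 i j x : i != j -> subst D (repl i j) x = cyl1 i (bmeet D (diag D i j) x).
Proof.
move=> ij; apply: finj => k w; split.
  move=> H; have := cd1 i j k w ij; rewrite fc => -[t [Ht dt]].
  have st : f (subst D (repl i j) x) k t.
    rewrite -cyl_sub // fc; exists w; split => // a ai; by rewrite Ht.
  rewrite fc; exists t; split => //; rewrite fM; split => //; exact: S5 st dt.
rewrite fc => -[t [Ht]]; rewrite fM => -[dt xt].
have := E3_sem i j x k t xt dt => st.
rewrite -cyl_sub // fc; by exists t.
Qed.

Lemma dsym i j k s : i != j -> f (diag D i j) k s -> f (diag D j i) k s.
Proof.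
move=> ij d; apply: NNPP => H.
have := E3_sem i j (bcompl D (diag D j i)) k s; rewrite fC sub_C E1 /repl eqxx.
rewrite (negbTE (neqC ij)) E2 f1; by move/(_ H d).
Qed.

Lemma dtrans i j l k s : i != j -> j != l -> i != l ->
  f (diag D i j) k s -> f (diag D j l) k s -> f (diag D i l) k s.
Proof.
move=> ij jl il a b; have := E3_sem j l (diag D i j) k s a b.
by rewrite E1 /repl eqxx (negbTE ij).
Qed.

Lemma dcyl l i j : l != i -> l != j -> cyl1 l (diag D i j) = diag D i j.
Proof.
move=> li lj.
have H : subst D (repl l i) (diag D i j) = diag D i j.
  by rewrite E1 /repl (negbTE (neqC li)) (negbTE (neqC lj)).
transitivity (cyl1 l (subst D (repl l i) (diag D i j))); first by rewrite H.
by rewrite cyl_sub // H.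
Qed.

Lemma commute t i (x : D) : exists m t', [/\ t' i = m, (forall a, a != i -> t' a = t a),
   (forall a, a != i -> t a != m) & subst D t (cyl1 i x) = cyl1 m (subst D t' x)].
Proof.
have [m Hm] : exists m, m \notin t @: [set~ i].
  apply: NNPP => H.
  have sub : [set: 'I_n] \subset t @: [set~ i].
    apply/subsetP => m _; apply: NNPP => Hm; apply: H; exists m; exact/negP.
  have := subset_leq_card sub; rewrite cardsT card_ord.
  have := leq_imset_card t [set~ i]; rewrite cardsC1 card_ord => le1 le2.
  have lt : (n.-1 < n)%N by rewrite ltn_predL; apply: leq_trans n3.
  by have := leq_ltn_trans (leq_trans le2 le1) lt; rewrite ltnn.
have tm : forall a, a != i -> t a != m.
  move=> a ai; apply: contra Hm => /eqP <-; apply: imset_f; by rewrite !inE.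
pose t' := fun a => if a == i then m else t a.
exists m, t'; split; first by rewrite /t' eqxx.
  by move=> a ai; rewrite /t' (negbTE ai).
  done.
rewrite /cyl1 (P11 t t') => [|a]; last by rewrite inE /t' => /negbTE ->.
rewrite P12.
  congr (subst D t' (cyl D _ x)); apply/setP => a; rewrite !inE /t'.
  case: (eqVneq a i) => [e|ai]; first by subst a; rewrite !eqxx.
  by rewrite (negbTE (tm a ai)).
have Hi : forall a, t' a \in [set m] -> a = i.
  move=> a; rewrite inE /t'; case: (eqVneq a i) => // ai; by rewrite (negbTE (tm a ai)).
by move=> a b /Hi -> /Hi ->.
Qed.

Lemma lowdim_sub l (y : D) t : cyl1 l y = y -> exists m, cyl1 m (subst D t y) = subst D t y.
Proof.
move=> Hy; have [m [t' [_ _ _ He]]] := commute t l y.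
rewrite Hy in He; exists m; rewrite He /cyl1 -P6; by rewrite setUid.
Qed.

Hypothesis gen : generated_by (fun x : D => dimset_not_full x).

Lemma subst_meet t (x y : D) : subst D t (bmeet D x y) = bmeet D (subst D t x) (subst D t y).
Proof. by apply: finj => k s; rewrite sub_M fM. Qed.

Lemma notfull_low (y : D) : dimset_not_full y -> exists l, cyl1 l y = y.
Proof.
move=> H; apply: NNPP => H'; apply: H => i Hi; apply: H'; by exists i.
Qed.

Section Comp.
Variables (k : K) (s0 : forall i, U k i).

Definition E i j (u : U k i) (v : U k j) :=
  exists s : forall a, U k a, [/\ s i = u, s j = v & f (diag D i j) k s].

Lemma dep i j s s' : s i = s' i -> s j = s' j -> f (diag D i j) k s -> f (diag D i j) k s'.
Proof.
move=> ei ej; apply: (coord_ind (fun a x y => x = y \/ (a != i /\ a != j))); last first.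
  move=> a; case: (eqVneq a i) => [e|ai]; first by subst a; left.
  case: (eqVneq a j) => [e|aj]; first by subst a; left.
  by right.
move=> t a u [<-|[ai aj]] ft; first by rewrite upd_same.
rewrite -(dcyl a i j) // fc_upd; exists (t a); rewrite upd_upd upd_same //.
Qed.

Lemma Esym_ i j u v : i != j -> E i j u v -> E j i v u.
Proof. by move=> ij [s [a b c]]; exists s; split => //; apply: (dsym i j k s ij c). Qed.

Lemma Etot_ i j u : i != j -> exists v, E i j u v.
Proof.
move=> ij; have := cd1 j i k (upd s0 i u) (neqC ij); rewrite fc => -[t [Ht dt]].
exists (t j), t; split => //; first by rewrite Ht // upd_eq.
exact: (dsym j i k t (neqC ij) dt).
Qed.

Lemma Etr_ i j l u v w : i != j -> j != l -> i != l -> E i j u v -> E j l v w -> E i l u w.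
Proof.
move=> ij jl il [s1 [a1 b1 c1]] [s2 [a2 b2 c2]].
exists (upd s2 i u); split; first by rewrite upd_eq.
  by rewrite upd_neq // neqC.
apply: (dtrans i j l) => //.
  apply: (dep i j s1) => //; first by rewrite upd_eq.
  by rewrite upd_neq ?(neqC ij) // a2 b1.
apply: (dep j l s2) => //; rewrite upd_neq //; exact: neqC.
Qed.

Definition ev := eqv n (U k) E.
Lemma ev_refl i u : ev i u i u.
Proof. exact: (eqv_refl n n3 (U k) E Etot_). Qed.
Lemma ev_sym i u j v : ev i u j v -> ev j v i u.
Proof. exact: eqv_sym. Qed.
Lemma ev_trans i u j v m x : ev i u j v -> ev j v m x -> ev i u m x.
Proof. exact: (eqv_trans n n3 (U k) E Esym_ Etot_ Etr_). Qed.
Lemma ev_E i u j v : i != j -> (ev i u j v <-> E i j u v).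
Proof. exact: (E_eqv n n3 (U k) E Esym_ Etot_ Etr_). Qed.
Lemma ev_partner i u u' : ev i u i u' -> forall l, l != i -> exists v, E i l u v /\ E i l u' v.
Proof. exact: (eqv_partner n n3 (U k) E Esym_ Etot_ Etr_). Qed.

Lemma E_f i j s : i != j -> (E i j (s i) (s j) <-> f (diag D i j) k s).
Proof.
move=> ij; split; last by move=> H; exists s.
by case=> s' [a b c]; apply: (dep i j s').
Qed.

Lemma Q4 a b s : f (diag D a b) k s <-> ev a (s a) b (s b).
Proof.
case: (eqVneq a b) => [e|ab].
  subst b; rewrite E2 f1; split => // _; exact: ev_refl.
by rewrite ev_E // E_f.
Qed.

Definition Resp1 x := forall t i u, ev i (t i) i u -> f x k t -> f x k (upd t i u).

Lemma resp_low l y : cyl1 l y = y -> Resp1 y.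
Proof.
move=> Hy t i u H fy.
case: (eqVneq l i) => [e|li].
  subst l; rewrite -Hy fc_upd; exists (t i); by rewrite upd_upd upd_same.
have [v [Ev Ev']] := ev_partner i (t i) u H l li.
pose s1 := upd t l v.
have fs1 : f y k s1 by rewrite -Hy fc_upd; exists (t l); rewrite /s1 upd_upd upd_same.
have ds1 : f (diag D i l) k s1.
  apply/(E_f i l s1 (neqC li)); by rewrite /s1 upd_eq upd_neq // neqC.
pose s2 := upd s1 i u.
have ss2 : f (subst D (repl i l) y) k s2.
  rewrite S6 ?(neqC li) // fc_upd; exists (s1 i); rewrite /s2 upd_upd upd_same fM; by split.
have ds2 : f (diag D i l) k s2.
  apply/(E_f i l s2 (neqC li)); by rewrite /s2 upd_eq upd_neq // /s1 upd_eq.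
have fs2 := S5 _ _ _ _ _ ss2 ds2.
rewrite -Hy fc_upd; exists v; rewrite -upd_comm ?(neqC li) //.
Qed.

Lemma R_compl x : Resp1 x -> Resp1 (bcompl D x).
Proof.
move=> Rx t i u H; rewrite !fC => nfx fxu; apply: nfx.
have := Rx (upd t i u) i (t i); rewrite upd_upd upd_same upd_eq; apply => //.
exact: ev_sym.
Qed.

Lemma R_join x y : Resp1 x -> Resp1 y -> Resp1 (bjoin D x y).
Proof. move=> Rx Ry t i u H; rewrite !fJ => -[a|a]; [left; exact: Rx | right; exact: Ry]. Qed.

Lemma R_meet x y : Resp1 x -> Resp1 y -> Resp1 (bmeet D x y).
Proof. move=> Rx Ry t i u H; rewrite !fM => -[a b]; split; [exact: Rx | exact: Ry]. Qed.

Lemma R_cyl1 j x : Resp1 x -> Resp1 (cyl1 j x).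
Proof.
move=> Rx t i u H; rewrite !fc_upd => -[u' fx].
case: (eqVneq i j) => [e|ij].
  subst j; exists u'; by rewrite upd_upd.
exists u'; rewrite -upd_comm //; apply: Rx => //; by rewrite upd_neq.
Qed.

Lemma R_diag a b : Resp1 (diag D a b).
Proof.
move=> t i u H; rewrite !Q4 => Hab.
have key : forall c, ev c (t c) c (upd t i u c).
  move=> c; case: (eqVneq c i) => [e|ci]; first by subst c; rewrite upd_eq.
  rewrite upd_neq //; exact: ev_refl.
apply: ev_trans (ev_sym _ _ _ _ (key a)) _.
exact: ev_trans Hab (key b).
Qed.

Lemma resp1_all x : Resp1 x.
Proof.
suff: forall t, Resp1 (subst D t x) by move/(_ id); rewrite P7.
pose P := fun x => forall t, Resp1 (subst D t x).
have sub : subuniverse P.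
  split; [|split; [|split; [|split; [|split; [|split; [|split]]]]]].
  - by move=> t s i u _ /sub_0.
  - by move=> t s i u _ _; apply: sub_1.
  - by move=> a b Pa Pb t; rewrite P9; apply: R_join.
  - by move=> a b Pa Pb t; rewrite subst_meet; apply: R_meet.
  - by move=> a Pa t; rewrite P10; apply: R_compl.
  - apply: cylG_closed => i a Pa t.
    have [m [t' [_ _ _ ->]]] := commute t i a; exact: R_cyl1.
  - by move=> s a Pa t; rewrite -P8; apply: Pa.
  - by move=> i j t; rewrite E1; apply: R_diag.
apply: (gen P sub) => y /notfull_low [l Hl] t.
have [m Hm] := lowdim_sub l y t Hl; exact: (resp_low m).
Qed.

Lemma resp_all x s s' : (forall i, ev i (s i) i (s' i)) -> f x k s -> f x k s'.
Proof. move=> H; apply: (coord_ind (fun i a b => ev i a i b)) => //; exact: resp1_all. Qed.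

Definition cls i (u : U k i) : forall j, U k j -> Prop := fun j v => ev j v i u.
Definition W := {C : forall j, U k j -> Prop | exists i u, C = cls i u}.

Lemma cls_eq i u j v : cls i u = cls j v <-> ev i u j v.
Proof.
split.
  move=> H; have := f_equal (fun C => C i u) H; rewrite /cls /= => <-; exact: ev_refl.
move=> H; apply: functional_extensionality_dep => a; apply: functional_extensionality => x.
apply: propositional_extensionality; rewrite /cls; split => H'.
  exact: ev_trans H' H.
exact: ev_trans H' (ev_sym _ _ _ _ H).
Qed.

Definition mkW i (u : U k i) : W := exist _ (cls i u) (ex_intro _ i (ex_intro _ u erefl)).

Lemma W_eq (a b : W) : proj1_sig a = proj1_sig b -> a = b.
Proof.
case: a => a pa; case: b => b pb /= e; subst b; congr exist; exact: proof_irrelevance.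
Qed.

Lemma mkW_eq i u j v : mkW i u = mkW j v <-> ev i u j v.
Proof.
rewrite -cls_eq; split; first by move/(f_equal (@proj1_sig _ _)).
by move=> e; apply: W_eq.
Qed.

Definition wof (s : forall i, U k i) : 'I_n -> W := fun i => mkW i (s i).

Lemma Q1 (C : W) i : exists u, proj1_sig C = cls i u.
Proof.
case: C => C [j [v eC]] /=; rewrite eC.
case: (eqVneq i j) => [e|ij]; first by subst j; exists v.
have [u Eu] := Etot_ j i v (neqC ij).
exists u; symmetry; apply/cls_eq; apply/(ev_E i u j v ij); exact: (Esym_ j i v u (neqC ij) Eu).
Qed.

Definition sec (w : 'I_n -> W) : forall i, U k i :=
  fun i => proj1_sig (constructive_indefinite_description _ (Q1 (w i) i)).

Lemma mkW_sec w i : mkW i (sec w i) = w i.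
Proof.
apply: W_eq => /=; rewrite /sec.
by case: (constructive_indefinite_description _ _) => u /= ->.
Qed.

Lemma wof_sec w : wof (sec w) = w.
Proof. apply: functional_extensionality => i; exact: mkW_sec. Qed.

Definition fp x (w : 'I_n -> W) := exists s, wof s = w /\ f x k s.

Lemma fp_wof x s : fp x (wof s) <-> f x k s.
Proof.
split; last by move=> H; exists s.
case=> s' [e fs']; apply: (resp_all x s') => // i.
by apply/mkW_eq; move/(f_equal (fun w => w i)): e.
Qed.

Lemma fp_sec x w : fp x w <-> f x k (sec w).
Proof. by rewrite -{1}(wof_sec w) fp_wof. Qed.

Lemma fpJ x y w : fp (bjoin D x y) w <-> fp x w \/ fp y w.
Proof. by rewrite !fp_sec fJ. Qed.
Lemma fpM x y w : fp (bmeet D x y) w <-> fp x w /\ fp y w.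
Proof. by rewrite !fp_sec fM. Qed.
Lemma fpC x w : fp (bcompl D x) w <-> ~ fp x w.
Proof. by rewrite !fp_sec fC. Qed.
Lemma fp0 w : fp (bzero D) w <-> False.
Proof. by rewrite !fp_sec f0. Qed.
Lemma fp1 w : fp (bone D) w <-> True.
Proof. by rewrite !fp_sec f1. Qed.

Lemma fp_c1 i x w : fp (cyl1 i x) w <-> exists t : 'I_n -> W, (forall j, j != i -> t j = w j) /\ fp x t.
Proof.
rewrite fp_sec fc_upd; split.
  case=> u fu; exists (wof (upd (sec w) i u)); split; last by rewrite fp_wof.
  by move=> j ji; rewrite /wof upd_neq // mkW_sec.
case=> t [Ht ft]; exists (sec t i); rewrite -fp_wof.
have -> // : wof (upd (sec w) i (sec t i)) = t.
apply: functional_extensionality => j; rewrite /wof.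
case: (eqVneq j i) => [e|ji]; first by subst j; rewrite upd_eq mkW_sec.
by rewrite upd_neq // mkW_sec Ht.
Qed.

Lemma fp_d a b w : fp (diag D a b) w <-> w a = w b.
Proof. by rewrite fp_sec Q4 -mkW_eq !mkW_sec. Qed.

Lemma fp_cyl G x w : fp (cyl D G x) w <-> exists t : 'I_n -> W, (forall j, j \notin G -> t j = w j) /\ fp x t.
Proof. exact: (cylG_sem (fun _ => W) fp fp_c1). Qed.

Definition good (t : 'I_n -> 'I_n) x := forall w, fp (subst D t x) w <-> fp x (w \o t).

Lemma good_id t x : (forall a, t a = a) -> good t x.
Proof.
move=> H w; have -> : t = id by apply: functional_extensionality.
by rewrite P7.
Qed.

Lemma good_repl i j x : good (repl i j) x.
Proof.
case: (eqVneq i j) => [e|ij].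
  subst j; apply: good_id => a; rewrite /repl; case: eqP => // ->.
move=> w; rewrite S6 // fp_c1; split.
  case=> t [Ht]; rewrite fpM fp_d => -[tij ft].
  have -> // : w \o repl i j = t.
  apply: functional_extensionality => a; rewrite /= /repl.
  case: (eqVneq a i) => [e|ai]; first by subst a; rewrite tij Ht // neqC.
  by rewrite Ht.
move=> H; exists (w \o repl i j); split.
  by move=> a ai; rewrite /= /repl (negbTE ai).
rewrite fpM fp_d; split => //; by rewrite /= /repl eqxx eq_sym (negbTE ij).
Qed.

Lemma good_comp s t x : good s (subst D t x) -> good t x -> good (s \o t) x.
Proof. by move=> Hs Ht w; rewrite P8 Hs Ht. Qed.

Lemma lowfp l y t t' : cyl1 l y = y -> (forall a, a != l -> t a = t' a) -> fp y t -> fp y t'.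
Proof.
move=> Hy H; rewrite -Hy !fp_c1 => -[r [Hr fr]]; exists r; split => // a al.
by rewrite Hr // H.
Qed.

Definition swap (i j : 'I_n) : 'I_n -> 'I_n := fun a => if a == i then j else if a == j then i else a.

Lemma good_via l y t r : cyl1 l y = y -> (forall a, a != l -> t a = r a) ->
  (forall x, good r x) -> good t y.
Proof.
move=> Hy Htr Hr w.
have -> : subst D t y = subst D r y.
  by rewrite -Hy /cyl1 (P11 t r) // => a; rewrite inE; apply: Htr.
rewrite Hr; split; apply: lowfp Hy _ => a al /=; by rewrite Htr.
Qed.

Lemma good_swap l y i j : cyl1 l y = y -> good (swap i j) y.
Proof.
move=> Hy.
case: (eqVneq i j) => [e|ij].
  subst j; apply: good_id => a; rewrite /swap; case: eqP => // ->.
case: (eqVneq l i) => [e|li].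
  subst l; apply: (good_via i y _ (repl j i)) => //; last exact: good_repl.
  move=> a ai; rewrite /swap /repl (negbTE ai); case: (eqVneq a j) => //.
case: (eqVneq l j) => [e|lj].
  subst l; apply: (good_via j y _ (repl i j)) => //; last exact: good_repl.
  move=> a aj; rewrite /swap /repl (negbTE aj); by case: (eqVneq a i).
apply: (good_via l y _ (repl l j \o (repl j i \o repl i l))) => //; last first.
  move=> x; apply: good_comp; first exact: good_repl.
  apply: good_comp; exact: good_repl.
move=> a al; rewrite /swap /repl /=.
case: (eqVneq a i) => [e|ai].
  subst a; by rewrite ?(negbTE li) ?(negbTE lj) ?(negbTE (neqC li)) ?(negbTE (neqC lj)) ?(negbTE ij) ?(negbTE (neqC ij)) ?(negbTE al) ?eqxx ?(negbTE li) ?(negbTE lj) ?(negbTE (neqC li)) ?(negbTE (neqC lj)) ?(negbTE ij) ?(negbTE (neqC ij)) ?(negbTE al) ?eqxx.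
case: (eqVneq a j) => [e|aj].
  subst a; by rewrite ?(negbTE li) ?(negbTE lj) ?(negbTE (neqC li)) ?(negbTE (neqC lj)) ?(negbTE ij) ?(negbTE (neqC ij)) ?(negbTE ai) ?(negbTE al) ?eqxx ?(negbTE li) ?(negbTE lj) ?(negbTE (neqC li)) ?(negbTE (neqC lj)) ?(negbTE ij) ?(negbTE (neqC ij)) ?(negbTE ai) ?(negbTE al) ?eqxx.
by rewrite ?(negbTE li) ?(negbTE lj) ?(negbTE (neqC li)) ?(negbTE (neqC lj)) ?(negbTE ij) ?(negbTE (neqC ij)) ?(negbTE ai) ?(negbTE al) ?(negbTE aj) ?eqxx ?(negbTE li) ?(negbTE lj) ?(negbTE (neqC li)) ?(negbTE (neqC lj)) ?(negbTE ij) ?(negbTE (neqC ij)) ?(negbTE ai) ?(negbTE al) ?(negbTE aj) ?eqxx.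
Qed.

Lemma swapK i j a : swap i j (swap i j a) = a.
Proof.
rewrite /swap; case: (eqVneq a i) => [e|ai].
  subst a; case: (eqVneq j i) => [e|ji]; first by subst.
  by rewrite eqxx.
case: (eqVneq a j) => [e|aj]; first by subst a; rewrite eqxx.
by rewrite (negbTE ai) (negbTE aj).
Qed.

Lemma good_low N : forall t y, (#|[set a | t a != a]| <= N)%N -> (exists l, cyl1 l y = y) -> good t y.
Proof.
elim: N => [|N IH] t y HN [l Hl];
  (case: (boolP ([set a | t a != a] == set0)) => [/eqP e | ne];
   [apply: good_id => a; move/setP/(_ a): e; rewrite !inE => /negbFE/eqP // | ]).
  by move: HN; rewrite leqn0 cards_eq0 (negbTE ne).
have [i] := set0Pn _ ne; rewrite inE => ti.
have [j tij] : exists j, t i = j by exists (t i).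
have ji : j != i by rewrite -tij.
case: (eqVneq (t j) j) => [tj|tj].
  pose t2 := fun a => if a == i then i else t a.
  have -> : t = t2 \o repl i j.
    apply: functional_extensionality => a; rewrite /= /t2 /repl.
    case: (eqVneq a i) => [e|ai]; first by subst a; rewrite (negbTE ji) tj.
    by rewrite (negbTE ai).
  apply: good_comp; last exact: good_repl.
  have lt : (#|[set a | t2 a != a]| < #|[set a | t a != a]|)%N.
    have pr : [set a | t2 a != a] \proper [set a | t a != a].
      apply/properP; split.
        apply/subsetP => a; rewrite !inE /t2; case: (eqVneq a i) => [e|//]; by subst a; rewrite eqxx.
      exists i; first by rewrite inE.
      by rewrite inE /t2 eqxx /= eqxx.
    exact: (proper_card pr).
  apply: IH; first by rewrite -ltnS (leq_trans lt HN).
  exact: (lowdim_sub l y (repl i j) Hl).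
pose t1 := t \o swap i j.
have -> : t = t1 \o swap i j.
  apply: functional_extensionality => a; by rewrite /= /t1 /= swapK.
apply: good_comp; last exact: (good_swap l y i j Hl).
have lt : (#|[set a | t1 a != a]| < #|[set a | t a != a]|)%N.
  have pr : [set a | t1 a != a] \proper [set a | t a != a].
    apply/properP; split.
      apply/subsetP => a; rewrite !inE /t1 /= /swap.
      case: (eqVneq a i) => [e|ai]; first by subst a; rewrite ti.
      case: (eqVneq a j) => [e|aj]; first by subst a; rewrite tij eqxx.
      done.
    exists j; rewrite !inE ?tj //= /t1 /= /swap eqxx.
    case: (eqVneq j i) => [e|_]; first by move: ji; rewrite e eqxx.
    by rewrite tij eqxx.
  exact: (proper_card pr).
apply: IH; first by rewrite -ltnS (leq_trans lt HN).
exact: (lowdim_sub l y (swap i j) Hl).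
Qed.

Lemma good_all x t : good t x.
Proof.
move: t; pose P := fun x => forall t, good t x.
have sub : subuniverse P.
  split; [|split; [|split; [|split; [|split; [|split; [|split]]]]]].
  - move=> t w; rewrite !fp_sec f0; split => //; exact: sub_0.
  - move=> t w; rewrite fp1; split => // _; rewrite fp_sec; exact: sub_1.
  - by move=> a b Pa Pb t w; rewrite P9 !fpJ Pa Pb.
  - by move=> a b Pa Pb t w; rewrite subst_meet !fpM Pa Pb.
  - by move=> a Pa t w; rewrite P10 !fpC Pa.
  - apply: cylG_closed => i a Pa t w.
    have [m [t' [t'i t'a tm ->]]] := commute t i a.
    rewrite !fp_c1; split.
      case=> r [Hr]; rewrite Pa => fr; exists (r \o t'); split => // j ji.
      by rewrite /= t'a // Hr // tm.
    case=> r [Hr fr]; exists (fun b => if b == m then r i else w b); split.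
      by move=> b bm; rewrite (negbTE bm).
    rewrite Pa; have -> // : (fun b => if b == m then r i else w b) \o t' = r.
    apply: functional_extensionality => a' /=.
    case: (eqVneq a' i) => [e|ai]; first by subst a'; rewrite t'i eqxx.
    by rewrite t'a // (negbTE (tm a' ai)) Hr.
  - by move=> s a Pa t w; rewrite -P8 Pa Pa.
  - by move=> i j t w; rewrite E1 !fp_d.
apply: (gen P sub) => y /notfull_low Hl t.
exact: (good_low _ t y (leqnn _) Hl).
Qed.

End Comp.
Hypothesis fsup : forall X a, is_sup X a -> forall k s, f a k s <-> exists x, X x /\ f x k s.

Lemma final : completely_representable D.
Proof.
exists {k : K & forall i, U k i}, (fun kk => W (projT1 kk)),
  (fun x kk w => fp (projT1 kk) x w).
split; [|split; [|split; [|split; [|split; [|split; [|split; [|split; [|split]]]]]]]].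
- move=> x y [k s0] w /=; exact: (fpJ k s0).
- move=> x y [k s0] w /=; exact: (fpM k s0).
- move=> x [k s0] w /=; exact: (fpC k s0).
- move=> [k s0] w /=; exact: (fp0 k s0).
- move=> [k s0] w /=; exact: (fp1 k s0).
- move=> G x [k s0] w /=; exact: (fp_cyl k s0).
- move=> t x [k s0] w /=; exact: (good_all k s0).
- move=> i j [k s0] w /=; exact: (fp_d k s0).
- move=> x y H; apply: finj => k s.
  have := H (existT _ k s) (wof k s); by rewrite /= !(fp_wof k s).
- move=> X a Ha [k s0] w /=; rewrite (fp_sec k s0) (fsup X a Ha); split.
    by case=> x [Xx fx]; exists x; split => //; rewrite (fp_sec k s0).
  by case=> x [Xx fx]; exists x; split => //; rewrite -(fp_sec k s0).
Qed.

End Alg.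

Theorem mainTheorem6 (n : nat) (D : pea_sig n) :
  3 <= n ->
  is_PEA D ->
  generated_by (fun x : D => dimset_not_full x) ->
  df_completely_representable D ->
  completely_representable D.
Proof.
move=> n3 [_ [_ [_ [_ [P5 [P6 [P7 [P8 [P9 [P10 [P11 [P12 [E1 [E2 E3]]]]]]]]]]]]]] gen
  [K [U [f [fJ [fM [fC [f0 [f1 [fc [finj fsup]]]]]]]]]].
exact: (final n D n3 P5 P6 P7 P8 P9 P10 P11 P12 E1 E2 E3 K U f fJ fM fC f0 f1 fc finj gen fsup).
Qed.
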